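(* Let $M$ be a graded finitely generated faithful graded multiplication $R$-module and $U$ a proper graded submodule of $M$, and assume $J_{gr}(M)=J_{gr}(R)M$. Then $U$ is a graded weakly $J_{gr}$-semiprime submodule of $M$ if and only if $(U:_RM)$ is a graded weakly $J_{gr}$-semiprime ideal of $R$.
   Context: Standing conventions: $\Gamma$ is a group, $R=\bigoplus_{g\in\Gamma}R_g$ is a commutative $\Gamma$-graded ring with identity, and $M=\bigoplus_{g\in\Gamma}M_g$ is a unitary $\Gamma$-graded $R$-module. $h(R)$, $h(M)$ are the homogeneous elements. A submodule $U$ is graded if $U=\bigoplus_g(U\cap M_g)$. $M$ is graded finitely generated if $M=Ra_1+\dots+Ra_n$ with $a_i\in h(M)$; graded multiplication if every graded submodule equals $KM$ for some graded ideal $K$ of $R$; faithful if $\mathrm{ann}_R(M)=0$. $(U:_RM)=\{r\in R: rM\subseteq U\}$. For a graded module $N$, a graded submodule $U\neq N$ is Gr-maximal if every graded submodule between $U$ and $N$ equals $U$ or $N$; $J_{gr}(N)$ is the intersection of all Gr-maximal submodules of $N$ ($=N$ if none); $J_{gr}(R)$ is this for $N=R$. A proper graded submodule $U$ of $M$ is graded weakly $J_{gr}$-semiprime if whenever $r_g\in h(R)$, $m_h\in h(M)$, $n\in\mathbb{Z}^+$ and $0\neq r_g^nm_h\in U$, then $r_gm_h\in U+J_{gr}(M)$; a graded ideal of $R$ is graded weakly $J_{gr}$-semiprime if it is so as a submodule of the graded $R$-module $R$. *)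

(* Defs.v *)
From HB Require Import structures.
From mathcomp Require Import all_boot all_order all_algebra.
From Stdlib Require List.
Set Implicit Arguments. Unset Strict Implicit. Unset Printing Implicit Defensive.
Import GRing.Theory.
Local Open Scope ring_scope.

Definition is_group (G : Type) (op : G -> G -> G) (e : G) (inv : G -> G) : Prop :=
  (forall a b c, op a (op b c) = op (op a b) c) /\
  (forall a, op e a = a /\ op a e = a) /\
  (forall a, op (inv a) a = e /\ op a (inv a) = e).

Definition add_subgroup (V : zmodType) (A : V -> Prop) : Prop :=
  A 0 /\ (forall x y, A x -> A y -> A (x - y)).

(* A = (+)_{g} C g  (internal direct sum of the family C inside V) *)
Definition direct_sum_on (G : Type) (V : zmodType) (A : V -> Prop)
    (C : G -> V -> Prop) : Prop :=
  (forall x, A x <-> exists (s : seq G) (f : G -> V),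
      List.NoDup s /\ (forall g, List.In g s -> C g (f g)) /\
      x = \sum_(g <- s) f g) /\
  (forall (s : seq G) (f : G -> V), List.NoDup s ->
      (forall g, List.In g s -> C g (f g)) -> \sum_(g <- s) f g = 0 ->
      forall g, List.In g s -> f g = 0).

Definition graded_ring (G : Type) (op : G -> G -> G) (R : pzRingType)
    (Rg : G -> R -> Prop) : Prop :=
  (forall g, add_subgroup (Rg g)) /\ direct_sum_on (fun _ => True) Rg /\
  (forall g h a b, Rg g a -> Rg h b -> Rg (op g h) (a * b)).

Definition graded_module (G : Type) (op : G -> G -> G) (R : pzRingType)
    (Rg : G -> R -> Prop) (M : lmodType R) (Mg : G -> M -> Prop) : Prop :=
  (forall g, add_subgroup (Mg g)) /\ direct_sum_on (fun _ => True) Mg /\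
  (forall g h r m, Rg g r -> Mg h m -> Mg (op g h) (r *: m)).

Definition homog (G V : Type) (C : G -> V -> Prop) (x : V) : Prop :=
  exists g, C g x.

Definition submodule (R : pzRingType) (M : lmodType R) (U : M -> Prop) : Prop :=
  U 0 /\ (forall x y, U x -> U y -> U (x + y)) /\ (forall r x, U x -> U (r *: x)).

Definition graded_submodule (G : Type) (R : pzRingType) (M : lmodType R)
    (Mg : G -> M -> Prop) (U : M -> Prop) : Prop :=
  submodule U /\ direct_sum_on U (fun g x => U x /\ Mg g x).

Definition gr_proper (V : Type) (U : V -> Prop) : Prop := exists x, ~ U x.

Definition gr_maximal (G : Type) (R : pzRingType) (M : lmodType R)
    (Mg : G -> M -> Prop) (U : M -> Prop) : Prop :=
  graded_submodule Mg U /\ gr_proper U /\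
  forall V : M -> Prop, graded_submodule Mg V -> (forall x, U x -> V x) ->
    (forall x, V x <-> U x) \/ (forall x, V x).

(* J_gr(M): intersection of all Gr-maximal submodules (= M if there are none) *)
Definition Jgr (G : Type) (R : pzRingType) (M : lmodType R)
    (Mg : G -> M -> Prop) : M -> Prop :=
  fun x => forall U, gr_maximal Mg U -> U x.

Definition ideal_mul (R : pzRingType) (M : lmodType R) (K : R -> Prop) : M -> Prop :=
  fun x => exists (n : nat) (k : 'I_n -> R) (m : 'I_n -> M),
    (forall i, K (k i)) /\ x = \sum_(i < n) k i *: m i.

Definition colon (R : pzRingType) (M : lmodType R) (U : M -> Prop) : R -> Prop :=
  fun r => forall m : M, U (r *: m).

Definition gr_finitely_generated (G : Type) (R : pzRingType) (M : lmodType R)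
    (Mg : G -> M -> Prop) : Prop :=
  exists (n : nat) (a : 'I_n -> M), (forall i, homog Mg (a i)) /\
    forall x : M, exists r : 'I_n -> R, x = \sum_(i < n) r i *: a i.

Definition faithful (R : pzRingType) (M : lmodType R) : Prop :=
  forall r : R, (forall m : M, r *: m = 0) -> r = 0.

(* graded ideals of R = graded submodules of the graded R-module R (= R^o) *)
Definition gr_multiplication (G : Type) (R : pzRingType) (Rg : G -> R -> Prop)
    (M : lmodType R) (Mg : G -> M -> Prop) : Prop :=
  forall N : M -> Prop, graded_submodule Mg N ->
    exists K : R^o -> Prop, graded_submodule (M := R^o) Rg K /\
      forall x : M, N x <-> ideal_mul (M := M) (K : R -> Prop) x.

Definition gr_weakly_Jgr_semiprime (G : Type) (R : pzRingType)
    (Rg : G -> R -> Prop) (M : lmodType R) (Mg : G -> M -> Prop)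
    (U : M -> Prop) : Prop :=
  graded_submodule Mg U /\ gr_proper U /\
  forall (r : R) (m : M) (n : nat), homog Rg r -> homog Mg m -> (0 < n)%N ->
    r ^+ n *: m <> 0 -> U (r ^+ n *: m) ->
    exists u j, U u /\ Jgr Mg j /\ r *: m = u + j.

(* Main.v *)
Require Import Defs.
From HB Require Import structures.
From mathcomp Require Import all_boot all_order all_algebra.
From mathcomp Require Import boolp.
From mathcomp Require Import fingroup perm.
Set Implicit Arguments. Unset Strict Implicit. Unset Printing Implicit Defensive.
Import GRing.Theory.
Local Open Scope ring_scope.
Lemma In_mem (G : Type) (s : seq {classic G}) (x : {classic G}) :
  List.In x s <-> x \in s.
Proof.
elim: s => [|y s IH] //=; rewrite in_cons; split.
- by case=> [->|/IH ->]; rewrite ?eqxx ?orbT.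
- by case/orP=> [/eqP ->|/IH]; [left|right].
Qed.

Lemma NoDup_uniq (G : Type) (s : seq {classic G}) : List.NoDup s <-> uniq s.
Proof.
elim: s => [|y s IH] /=; first by split => // _; constructor.
split.
- move=> H; inversion H; subst; apply/andP; split; last by apply/IH.
  by apply/negP => /In_mem.
- case/andP => Hy Hs; constructor; last by apply/IH.
  by move/In_mem; rewrite (negbTE Hy).
Qed.

Lemma sum_closed (G : Type) (V : zmodType) (P : V -> Prop) :
  P 0 -> (forall x y, P x -> P y -> P (x + y)) ->
  forall (s : seq G) (f : G -> V), (forall g, List.In g s -> P (f g)) ->
  P (\sum_(g <- s) f g).
Proof.
move=> P0 PD; elim=> [|y s IH] f Hf; first by rewrite big_nil.
rewrite big_cons; apply: PD; first by apply: Hf; left.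
by apply: IH => g Hg; apply: Hf; right.
Qed.

Lemma sum_closed_ord (V : zmodType) (P : V -> Prop) :
  P 0 -> (forall x y, P x -> P y -> P (x + y)) ->
  forall n (f : 'I_n -> V), (forall i, P (f i)) -> P (\sum_(i < n) f i).
Proof.
move=> P0 PD n f Hf; elim/big_ind: _ => //.
Qed.

Definition ext (G : Type) (V : zmodType) (s : seq {classic G}) (f : G -> V) (g : {classic G}) : V :=
  if g \in s then f g else 0.

Lemma sum_ext (G : Type) (V : zmodType) (s w : seq {classic G}) (f : G -> V) :
  uniq s -> uniq w -> {subset s <= w} ->
  \sum_(g <- w) ext s f g = \sum_(g <- s) f g.
Proof.
move=> us uw sw; rewrite /ext -big_mkcond -big_filter /=.
apply: perm_big; apply: uniq_perm; first by rewrite filter_uniq.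
  by [].
by move=> x; rewrite mem_filter; case: (boolP (x \in s)) => // /sw ->.
Qed.

Lemma UE (G:Type) (V:zmodType) (A : V -> Prop) (C : G -> V -> Prop) :
 (forall g, add_subgroup (C g)) -> direct_sum_on A C ->
 forall (s t : seq G) f u, List.NoDup s -> List.NoDup t ->
 (forall g, List.In g s -> C g (f g)) -> (forall g, List.In g t -> C g (u g)) ->
 \sum_(g <- s) f g = \sum_(g <- t) u g ->
 forall g, List.In g s -> (List.In g t /\ f g = u g) \/ (~ List.In g t /\ f g = 0).
Proof.
move=> HC [_ D] s t f u ns nt Cf Cu E.
pose s' : seq {classic G} := s. pose t' : seq {classic G} := t.
have us : uniq s' by apply/NoDup_uniq.
have ut : uniq t' by apply/NoDup_uniq.
pose w := undup (s' ++ t').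
have uw : uniq w by apply: undup_uniq.
pose h := fun g => ext s' f g - ext t' u g.
have Cext : forall (r : seq {classic G}) (k : G -> V), (forall g, List.In g r -> C g (k g)) ->
   forall g, C g (ext r k g).
  move=> r k Hk g; rewrite /ext; case: ifP => [/In_mem|_]; first exact: Hk.
  by case: (HC g).
have Ch : forall g, List.In g w -> C g (h g).
  move=> g _; rewrite /h; case: (HC g) => _; apply; exact: Cext.
have Sh : \sum_(g <- w) h g = 0.
  rewrite sumrB !sum_ext //; first by rewrite E subrr.
    by move=> x xt; rewrite mem_undup mem_cat xt orbT.
  by move=> x xs; rewrite mem_undup mem_cat xs.
have := D w h; rewrite -/w => /(_ (proj2 (NoDup_uniq w) uw) Ch Sh) H0.
move=> g gs.
have gw : List.In g w by apply/In_mem; rewrite mem_undup mem_cat; apply/orP; left; apply/In_mem.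
move: (H0 g gw); rewrite /h /ext.
have -> : (g : {classic G}) \in s' by apply/In_mem.
case: (boolP ((g : {classic G}) \in t')) => gt /eqP; rewrite subr_eq0 => /eqP ->.
  by left; split => //; apply/In_mem.
by right; split => //; move/In_mem; rewrite (negbTE gt).
Qed.

Lemma ext_cases (G : Type) (V : zmodType) (s : seq G) (f : G -> V) g :
  ext (s : seq {classic G}) f g = 0 \/ (List.In g s /\ ext (s : seq {classic G}) f g = f g).
Proof.
rewrite /ext; case: ifP => [/In_mem H|_]; by [right|left].
Qed.

Lemma SD (G:Type) (V:zmodType) (C : G -> V -> Prop) :
 (forall g, add_subgroup (C g)) ->
 forall (s t : seq G) f u, List.NoDup s -> List.NoDup t ->
 (forall g, List.In g s -> C g (f g)) -> (forall g, List.In g t -> C g (u g)) ->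
 let w := undup ((s : seq {classic G}) ++ (t : seq {classic G})) in
 List.NoDup w /\ (forall g, C g (ext (s : seq {classic G}) f g + ext (t : seq {classic G}) u g)) /\
 \sum_(g <- s) f g + \sum_(g <- t) u g =
   \sum_(g <- w) (ext (s : seq {classic G}) f g + ext (t : seq {classic G}) u g).
Proof.
move=> HC s t f u ns nt Cf Cu w.
have us : uniq (s : seq {classic G}) by apply/NoDup_uniq.
have ut : uniq (t : seq {classic G}) by apply/NoDup_uniq.
have Cext : forall (r : seq G) (k : G -> V), (forall g, List.In g r -> C g (k g)) ->
   forall g, C g (ext (r : seq {classic G}) k g).
  move=> r k Hk g; rewrite /ext; case: ifP => [/In_mem|_]; first exact: Hk.
  by case: (HC g).
split; first by apply/NoDup_uniq; apply: undup_uniq.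
split.
  move=> g; case: (HC g) => C0 CB.
  have -> : forall x y : V, x + y = x - (0 - y) by move=> x y; rewrite sub0r opprK.
  by apply: (CB); [apply: Cext|apply: (CB) => //; apply: Cext].
rewrite big_split /= !sum_ext //.
- by apply: undup_uniq.
- by move=> x xt; rewrite mem_undup mem_cat xt orbT.
- by apply: undup_uniq.
- by move=> x xs; rewrite mem_undup mem_cat xs.
Qed.

Lemma map_NoDup (A B : Type) (phi : A -> B) (psi : B -> A) :
  (forall x, psi (phi x) = x) -> forall s, List.NoDup s -> List.NoDup (map phi s).
Proof.
move=> K; elim=> [|x s IH] H /=; first by constructor.
inversion H; subst; constructor; last exact: IH.
move=> Hin; apply: H2; elim: s Hin {H H3 IH} => [|y s IH] //= [E|Hs].
  by left; rewrite -(K x) -E K.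
by right; apply: IH.
Qed.

Lemma map_In (A B : Type) (phi : A -> B) s y :
  List.In y (map phi s) -> exists x, y = phi x /\ List.In x s.
Proof.
elim: s => [|x s IH] //= [<-|/IH [z [-> Hz]]]; first by exists x; split => //; left.
by exists z; split => //; right.
Qed.

Lemma grp_cancel (G : Type) (op : G -> G -> G) (e : G) (inv : G -> G) :
  is_group op e inv -> forall g h, op (op g h) (inv h) = g.
Proof.
case=> As [Id Iv] g h; rewrite -As; by case: (Iv h) => _ ->; case: (Id g).
Qed.

Lemma Rm_graded (G : Type) (op : G -> G -> G) (e : G) (inv : G -> G)
  (HG : is_group op e inv)
  (R : comPzRingType) (Rg : G -> R -> Prop) (HR : graded_ring op Rg)
  (M : lmodType R) (Mg : G -> M -> Prop) (HM : graded_module op Rg Mg)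
  h (m : M) (Hm : Mg h m) :
  graded_submodule Mg (fun x => exists r, x = r *: m).
Proof.
case: HR => HRs [[DR1 DR2] HRm]; case: HM => HMs [[DM1 DM2] HMm].
have Hsub : submodule (fun x : M => exists r, x = r *: m).
  split; first by exists 0; rewrite scale0r.
  split; first by move=> x y [r1 ->] [r2 ->]; exists (r1 + r2); rewrite scalerDl.
  by move=> r x [r' ->]; exists (r * r'); rewrite scalerA.
split => //; split; last first.
  move=> s f ns Hf; apply: DM2 => // g /Hf []//.
move=> x; split; last first.
  case=> s [f [_ [Hf ->]]].
  case: Hsub => H0 [HD _]; apply: (sum_closed (P := fun x : M => exists r, x = r *: m)) => // g /Hf []//.
case=> r ->.
case: (proj1 (DR1 r) I) => s [f [ns [Hf Er]]].
pose phi := fun g => op g h. pose psi := fun g => op g (inv h).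
have K : forall g, psi (phi g) = g by move=> g; exact: grp_cancel HG g h.
exists (map phi s), (fun g => f (psi g) *: m); split; first exact: map_NoDup K s ns.
split.
  move=> g Hg; case: (map_In Hg) => g0 [-> Hg0]; rewrite K; split; first by exists (f g0).
  by apply: HMm => //; apply: Hf.
rewrite big_map Er scaler_suml; apply: eq_bigr => g _; by rewrite K.
Qed.

Lemma colon_graded (G : Type) (op : G -> G -> G) (e : G) (inv : G -> G)
  (HG : is_group op e inv)
  (R : comPzRingType) (Rg : G -> R -> Prop) (HR : graded_ring op Rg)
  (M : lmodType R) (Mg : G -> M -> Prop) (HM : graded_module op Rg Mg)
  (U : M -> Prop) (HU : graded_submodule Mg U) :
  graded_submodule (M := R^o) Rg (colon U).
Proof.
case: HR => HRs [[DR1 DR2] HRm]; case: HM => HMs [[DM1 DM2] HMm].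
case: HU => [[U0 [UD UZ]] [DU1 DU2]].
have Hsub : submodule (M := R^o) (colon U).
  split; first by move=> m; rewrite scale0r.
  split; first by move=> x y Hx Hy m; rewrite scalerDl; apply: UD.
  by move=> r x Hx m; change (U ((r * x) *: m)); rewrite -scalerA; apply: UZ.
split => //; split; last first.
  move=> s f ns Hf; apply: DR2 => // g /Hf []//.
move=> x; split; last first.
  case=> s [f [_ [Hf ->]]].
  case: Hsub => H0 [HD _]; apply: (sum_closed (P := colon U)) => // g /Hf []//.
move=> Kr.
case: (proj1 (DR1 x) I) => s [f [ns [Hf Er]]].
exists s, f; split => //; split => //.
move=> g gs; split; last exact: Hf.
have Hhom : forall h m, Mg h m -> U (f g *: m).
  move=> h m Hm.
  pose phi := fun g => op g h. pose psi := fun g => op g (inv h).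
  have K : forall g, psi (phi g) = g by move=> g'; exact: grp_cancel HG g' h.
  case: (proj1 (DU1 (x *: m)) (Kr m)) => t [u [nt [Hu Eu]]].
  have E : \sum_(g <- map phi s) (f (psi g) *: m) = \sum_(g <- t) u g.
    rewrite -Eu big_map Er scaler_suml; apply: eq_bigr => g' _; by rewrite K.
  have := UE HMs (conj DM1 DM2) (map_NoDup K ns) nt _ _ E.
  case/(_ _ _ (phi g) _).
  - move=> g' Hg'; case: (map_In Hg') => g0 [-> Hg0]; rewrite K.
    by apply: HMm => //; apply: Hf.
  - by move=> g' /Hu [].
  - elim: (s) gs => [|y s' IH] //= [->|/IH]; by [left|right].
  - by rewrite K => [[/Hu [] Hu1 _ ->]].
  - by rewrite K => [[_ ->]].
move=> m; case: (proj1 (DM1 m) I) => t [mm [_ [Hmm ->]]].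
rewrite scaler_sumr; apply: (sum_closed (P := U)) => // g' /Hmm; exact: Hhom.
Qed.

Lemma nil_J (G : Type) (op : G -> G -> G) (e : G) (inv : G -> G)
  (HG : is_group op e inv)
  (R : comPzRingType) (Rg : G -> R -> Prop) (HR : graded_ring op Rg)
  (x : R) gx (Hx : Rg gx x) k (Hk : x ^+ k = 0) : Jgr (M := R^o) Rg x.
Proof.
case: (HR) => HRs [[DR1 DR2] HRm].
move=> P [[[P0 [PD PZ]] [DP1 DP2]] [[z nPz] Pmax]].
case: (pselect (P x)) => // nPx; exfalso.
pose V := fun y : R^o => exists p c, P p /\ y = p + c * x.
have Vsub : submodule (M := R^o) V.
  split; first by exists 0, 0; rewrite mul0r addr0.
  split.
    move=> y1 y2 [p1 [c1 [P1 ->]]] [p2 [c2 [P2 ->]]].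
    exists (p1 + p2), (c1 + c2); split; first exact: PD.
    by rewrite mulrDl addrACA.
  move=> r y [p [c [Pp ->]]]; exists (r *: p), (r * c); split; first exact: PZ.
  by change (r * (p + c * x) = r * p + r * c * x); rewrite mulrDr mulrA.
have Vgr : graded_submodule (M := R^o) Rg V.
  split => //; split; last first.
    move=> s f ns Hf; apply: DR2 => // g /Hf []//.
  move=> y; split; last first.
    case=> s [f [_ [Hf ->]]].
    case: Vsub => H0 [HD _]; apply: (sum_closed (P := V)) => // g /Hf []//.
  case=> p [c [Pp ->]].
  case: (proj1 (DP1 p) Pp) => s [f [ns [Hf Ep]]].
  case: (proj1 (DR1 c) I) => t0 [f0 [nt0 [Hf0 Ec]]].
  pose phi := fun g => op g gx. pose psi := fun g => op g (inv gx).
  have K : forall g, psi (phi g) = g by move=> g'; exact: grp_cancel HG g' gx.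
  pose u := fun g => f0 (psi g) * x.
  have nt := map_NoDup K nt0.
  have Hu : forall g, List.In g (map phi t0) -> Rg g (u g).
    move=> g Hg; case: (map_In Hg) => g0 [-> Hg0]; rewrite /u K; apply: HRm => //.
    exact: Hf0.
  have Ecx : c * x = \sum_(g <- map phi t0) u g.
    by rewrite big_map Ec mulr_suml; apply: eq_bigr => g _; rewrite /u K.
  have Hf' : forall g, List.In g s -> Rg g (f g) by move=> g /Hf [].
  case: (SD HRs ns nt Hf' Hu) => nw [Cw Ew].
  exists (undup ((s : seq {classic G}) ++ (map phi t0 : seq {classic G}))).
  exists (fun g => ext (s : seq {classic G}) f g + ext (map phi t0 : seq {classic G}) u g).
  split; first exact: nw.
  split; last by rewrite Ep Ecx Ew.
  move=> g _; split; last exact: Cw.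
  case: (ext_cases s f g) => [->|[/Hf [Pf _] ->]];
  case: (ext_cases (map phi t0) u g) => [->|[_ ->]].
  - by exists 0, 0; rewrite mul0r addr0.
  - by exists 0, (f0 (psi g)); rewrite add0r.
  - by exists (f g), 0; rewrite mul0r !addr0.
  - by exists (f g), (f0 (psi g)).
case: (Pmax V Vgr).
- by move=> y Py; exists y, 0; rewrite mul0r addr0.
- move=> EV; apply: nPx; apply/EV; exists 0, 1; by rewrite add0r mul1r.
- move=> AV; case: (AV 1) => p [c [Pp Ep]].
  have P1 : P 1.
    have -> : (1 : R) = (\sum_(i < k) (c * x) ^+ i) * p.
      have -> : p = - (c * x - 1) by rewrite Ep opprB addrK.
      by rewrite mulrN mulrC -subrX1 exprMn Hk mulr0 sub0r opprK.
    exact: PZ.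
  apply: nPz; have -> : z = z *: (1 : R^o) by change (z = z * 1); rewrite mulr1.
  exact: PZ.
Qed.

Lemma theta_one (R : comPzRingType) (M : lmodType R) n (a : 'I_n -> M)
  (Hspan : forall x : M, exists r : 'I_n -> R, x = \sum_(i < n) r i *: a i)
  (Hfaith : faithful M)
  (T : 'I_n -> 'I_n -> R)
  (HT : forall j, a j = \sum_(l < n) T j l *: a l)
  (theta : R -> Prop) (th0 : theta 0) (thD : forall x y, theta x -> theta y -> theta (x + y))
  (thM : forall r y, theta y -> theta (r * y))
  (thT : forall j l, theta (T j l)) :
  theta 1.
Proof.
have thN : forall y, theta y -> theta (- y) by move=> y Hy; rewrite -mulN1r; apply: (thM).
have thMr : forall r y, theta y -> theta (y * r) by move=> r y Hy; rewrite mulrC; apply: (thM).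
pose A := \matrix_(j < n, l < n) ((j == l)%:R - T j l) : 'M[R]_n.
have Rel : forall j, \sum_(l < n) A j l *: a l = 0.
  move=> j; under eq_bigr => l _ do rewrite mxE scalerBl.
  rewrite sumrB -HT (bigD1 j) //= eqxx scale1r big1 ?addr0 ?subrr //.
  by move=> l lj; rewrite eq_sym (negbTE lj) scale0r.
have Hdet : forall i, \det A *: a i = 0.
  move=> i.
  have -> : \det A *: a i = \sum_(l < n) ((\det A)%:M : 'M[R]_n) i l *: a l.
    rewrite (bigD1 i) //= mxE eqxx mulr1n big1 ?addr0 //.
    by move=> l li; rewrite mxE eq_sym (negbTE li) mulr0n scale0r.
  rewrite -mul_adj_mx.
  under eq_bigr => l _ do rewrite mxE scaler_suml.
  rewrite exchange_big /= big1 // => j _.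
  under eq_bigr => l _ do rewrite -scalerA.
  by rewrite -scaler_sumr Rel scaler0.
have D0 : \det A = 0.
  apply: Hfaith => m; case: (Hspan m) => r ->.
  rewrite scaler_sumr big1 // => i _; by rewrite scalerA mulrC -scalerA Hdet scaler0.
have Hth : theta (\det A - 1).
  rewrite /determinant (bigD1 (1%g : {perm 'I_n})) //= odd_perm1 expr0 mul1r addrAC.
  apply: (thD).
    pose Q := fun y : R => theta (y - 1).
    apply: (big_ind Q); rewrite /Q.
    - by rewrite subrr.
    - move=> x y Hx Hy.
      have -> : x * y - 1 = x * (y - 1) + (x - 1) by rewrite mulrBr mulr1 addrA subrK.
      by apply: (thD) => //; apply: (thM).
    - move=> i _; rewrite perm1 mxE eqxx addrAC subrr add0r; exact: (thN).
  apply: (big_ind theta) => // s s1; apply: (thM).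
  have [i si] : exists i, s i != i.
    case: (pselect (exists i, s i != i)) => // Hn; exfalso.
    move/eqP: s1; apply; apply/permP => i; rewrite perm1.
    by case: (eqVneq (s i) i) => // H; case: Hn; exists i.
  rewrite (bigD1 i) //=; apply: (thMr).
  by rewrite mxE eq_sym (negbTE si) sub0r; apply: (thN).
by move: Hth; rewrite D0 sub0r => /thN; rewrite opprK.
Qed.

Lemma binom_ideal (R : comPzRingType) (Q : R -> Prop) (Q0 : Q 0)
  (QD : forall x y, Q x -> Q y -> Q (x + y)) (QM : forall r y, Q y -> Q (r * y))
  (y z : R) p q : Q (y ^+ p) -> Q (z ^+ q) -> Q ((y + z) ^+ (p + q)).
Proof.
move=> Hy Hz; rewrite exprDn.
apply: (sum_closed_ord (P := Q)) => // i.
rewrite -mulr_natl; apply: (QM).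
case: (leqP q i) => [qi|iq].
  have -> : z ^+ i = z ^+ q * z ^+ (i - q) by rewrite -exprD subnKC.
  by rewrite mulrCA mulrC; apply: (QM).
have -> : (p + q - i = p + (q - i))%N by rewrite addnBA // ltnW.
by rewrite exprD -mulrA mulrC; apply: (QM).
Qed.

Lemma cancel_lem (R : comPzRingType) (M : lmodType R) n (a : 'I_n -> M)
  (Hfaith : faithful M)
  (c : 'I_n -> R) (Hc : forall i m, exists d, c i *: m = d *: a i)
  (Hc1 : \sum_(i < n) c i = 1)
  (L : R -> Prop) (L0 : L 0) (LD : forall x y, L x -> L y -> L (x + y))
  (LM : forall r y, L y -> L (r * y))
  (x : R) (Hx : forall i, exists l : 'I_n -> R, (forall j, L (l j)) /\
        x *: a i = \sum_(j < n) l j *: a j) :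
  L x.
Proof.
have step1 : forall i, L (c i ^+ 2 * x).
  move=> i; case: (Hx i) => l [Hl Exi].
  case: (choice (fun j => Hc i (a j))) => d Hd.
  pose lam := \sum_(j < n) l j * d j.
  have Llam : L lam by apply: (sum_closed_ord (P := L)) => // j; rewrite mulrC; apply: LM.
  have E1 : (c i * x) *: a i = lam *: a i.
    rewrite -scalerA Exi scaler_sumr /lam scaler_suml; apply: eq_bigr => j _.
    by rewrite scalerA [c i * _]mulrC -!scalerA Hd.
  have -> : c i ^+ 2 * x = lam * c i.
    apply/eqP; rewrite -subr_eq0; apply/eqP; apply: Hfaith => m.
    case: (Hc i m) => e He.
    have A1 : (c i ^+ 2 * x) *: m = e *: ((c i * x) *: a i).
      rewrite expr2 mulrAC -[(c i * x * c i) *: m]scalerA He !scalerA.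
      by congr (_ *: _); exact: mulrC.
    have A2 : (lam * c i) *: m = e *: (lam *: a i).
      rewrite -[(lam * c i) *: m]scalerA He !scalerA.
      by congr (_ *: _); exact: mulrC.
    by rewrite scalerBl A1 A2 E1 subrr.
  by rewrite mulrC; apply: LM.
pose Q := fun y => L (y * x).
have Q0 : Q 0 by rewrite /Q mul0r.
have QD : forall y z, Q y -> Q z -> Q (y + z) by move=> y z; rewrite /Q mulrDl; apply: LD.
have QM : forall r y, Q y -> Q (r * y) by move=> r y; rewrite /Q -mulrA; apply: LM.
have : exists k, Q ((\sum_(i < n) c i) ^+ k).
  apply: (big_ind (fun z => exists k, Q (z ^+ k))).
  - by exists 1%N; rewrite expr1.
  - move=> y z [p Hp] [q Hq]; exists (p + q)%N; exact: binom_ideal.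
  - by move=> i _; exists 2%N; apply: step1.
by rewrite Hc1 => [[k]]; rewrite expr1n /Q mul1r.
Qed.

Lemma expand_lem (R : comPzRingType) (M : lmodType R) n (a : 'I_n -> M)
  (Hspan : forall x : M, exists r : 'I_n -> R, x = \sum_(i < n) r i *: a i)
  (L : R -> Prop) (L0 : L 0) (LD : forall x y, L x -> L y -> L (x + y))
  (LM : forall r y, L y -> L (r * y))
  N (k : 'I_N -> R) (mm : 'I_N -> M) (Hk : forall p, L (k p)) :
  exists l : 'I_n -> R, (forall j, L (l j)) /\
    \sum_(p < N) k p *: mm p = \sum_(j < n) l j *: a j.
Proof.
case: (choice (fun p => Hspan (mm p))) => rho Hrho.
exists (fun j => \sum_(p < N) k p * rho p j); split.
  move=> j; apply: (sum_closed_ord (P := L)) => // p; rewrite mulrC; exact: LM.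
under eq_bigr => p _ do rewrite (Hrho p) scaler_sumr.
rewrite exchange_big /=; apply: eq_bigr => j _.
rewrite scaler_suml; apply: eq_bigr => p _; by rewrite scalerA.
Qed.

Lemma ideal_mul1 (R : comPzRingType) (M : lmodType R) (K : R -> Prop) (k : R) (m : M) :
  K k -> ideal_mul K (k *: m).
Proof.
move=> Kk; exists 1%N, (fun _ => k), (fun _ => m); split => //.
by rewrite big_ord1.
Qed.
Lemma nilp_aux (R : comPzRingType) (r s b : R) k : (r * s * b) ^+ k.+1 = (r ^+ k.+1 * s * b) * (s ^+ k * b ^+ k).
Proof.
rewrite !exprMn [s ^+ k.+1]exprS [b ^+ k.+1]exprS.
rewrite -!mulrA; congr (_ * _).
congr (_ * _); exact: mulrCA.
Qed.
Lemma nilp_aux2 (R : comPzRingType) (r b : R) k : (r * b) ^+ k.+1 = (r ^+ k.+1 * b) * b ^+ k.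
Proof. by rewrite exprMn [b ^+ k.+1]exprS mulrA. Qed.

Theorem theorem2p20 (G : Type) (op : G -> G -> G) (e : G) (inv : G -> G)
  (HG : is_group op e inv)
  (R : comPzRingType) (Rg : G -> R -> Prop) (HR : graded_ring op Rg)
  (M : lmodType R) (Mg : G -> M -> Prop) (HM : graded_module op Rg Mg)
  (Hfg : gr_finitely_generated Mg) (Hfaith : faithful M)
  (Hmult : gr_multiplication Rg Mg)
  (U : M -> Prop) (HU : graded_submodule Mg U) (HUp : gr_proper U)
  (HJ : forall x : M, Jgr Mg x <-> ideal_mul (M := M) (Jgr (M := R^o) Rg : R -> Prop) x) :
  gr_weakly_Jgr_semiprime Rg Mg U <->
  gr_weakly_Jgr_semiprime (M := R^o) Rg Rg (colon U).
Proof.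
have HR' := HR; case: HR' => HRs [[DR1 DR2] HRm].
have HM' := HM; case: HM' => HMs [[DM1 DM2] HMm].
have HU' := HU; case: HU' => [[U0 [UD UZ]] _].
pose J := Jgr (M := R^o) Rg : R -> Prop.
have J0 : J 0 by move=> P [[[P0 _] _] _].
have JD : forall x y, J x -> J y -> J (x + y).
  move=> x y Jx Jy P HP; have := HP; case=> [[[_ [PD _]] _] _]; apply: PD; [exact: Jx|exact: Jy].
have JM : forall r y, J y -> J (r * y).
  move=> r y Jy P HP; have := HP; case=> [[[_ [_ PZ]] _] _]; exact: (PZ r y (Jy P HP)).
pose K := colon U.
have K0 : K 0 by move=> m; rewrite scale0r.
have KD : forall x y, K x -> K y -> K (x + y) by move=> x y Hx Hy m; rewrite scalerDl; apply: UD.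
have KM : forall r y, K y -> K (r * y) by move=> r y Hy m; rewrite -scalerA; apply: (UZ).
pose L := fun y => exists u j, K u /\ J j /\ y = u + j.
have L0 : L 0 by exists 0, 0; rewrite addr0.
have LD : forall x y, L x -> L y -> L (x + y).
  move=> x y [u1 [j1 [Ku1 [Jj1 ->]]]] [u2 [j2 [Ku2 [Jj2 ->]]]].
  exists (u1 + u2), (j1 + j2); do !split; [exact: KD|exact: JD|by rewrite addrACA].
have LM : forall r y, L y -> L (r * y).
  move=> r y [u [j [Ku [Jj ->]]]]; exists (r * u), (r * j).
  by do !split; [exact: KM|exact: JM|rewrite mulrDr].
have LK : forall y, K y -> L y by move=> y Ky; exists y, 0; rewrite addr0.
have LJ : forall y, J y -> L y by move=> y Jy; exists 0, y; rewrite add0r.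
have Hcyc : forall (m : M), homog Mg m -> exists I : R^o -> Prop,
    graded_submodule (M := R^o) Rg I /\
    forall x : M, (exists r, x = r *: m) <-> ideal_mul (I : R -> Prop) x.
  move=> m [h Hm]; apply: Hmult; exact (Rm_graded HG HR HM Hm).
split.
-
  case=> _ [_ WU]; split; first exact (colon_graded HG HR HM HU).
  split.
    case: HUp => z nUz; exists 1 => K1; apply: nUz; by have := K1 z; rewrite scale1r.
  move=> r s k [gr Hr] [gs Hs] kpos Hne HK.
  case: Hfg => n [a [Ha Hspan]].
  pose Col := fun i y => forall m : M, exists d, y *: m = d *: a i.
  have Col0 : forall i, Col i 0 by move=> i m; exists 0; rewrite !scale0r.
  have ColD : forall i x y, Col i x -> Col i y -> Col i (x + y).
    move=> i x y Hx Hy m; case: (Hx m) => d1 E1; case: (Hy m) => d2 E2.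
    by exists (d1 + d2); rewrite !scalerDl E1 E2.
  have ColM : forall i r y, Col i y -> Col i (r * y).
    move=> i r' y Hy m; case: (Hy m) => d E; exists (r' * d).
    by rewrite -!scalerA E.
  have HT : forall j, exists Tj : 'I_n -> R, (forall l, Col j (Tj l)) /\
       a j = \sum_(l < n) Tj l *: a l.
    move=> j; case: (Hcyc (a j) (Ha j)) => I [_ HI].
    case: (proj1 (HI (a j)) (ex_intro _ 1 (esym (scale1r _)))) => N [kk [mm [Hkk Ea]]].
    have := expand_lem Hspan (Col0 j) (ColD j) (ColM j) (k := kk) mm.
    case.
      move=> p m; apply/HI; apply: ideal_mul1; exact: Hkk.
    move=> l [Hl El]; exists l; split => //; by rewrite Ea El.
  case: (choice HT) => T HT2.
  pose theta := fun y => exists cc : 'I_n -> R, (forall i, Col i (cc i)) /\ y = \sum_(i < n) cc i.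
  have th1 : theta 1.
    apply: (theta_one Hspan Hfaith (T := T)).
    - by move=> j; case: (HT2 j).
    - by exists (fun _ => 0); split => //; rewrite big1.
    - move=> x y [c1 [Hc1 ->]] [c2 [Hc2 ->]]; exists (fun i => c1 i + c2 i); split.
        by move=> i; apply: ColD.
      by rewrite big_split.
    - move=> r' y [c1 [Hc1 ->]]; exists (fun i => r' * c1 i); split.
        by move=> i; apply: ColM.
      by rewrite mulr_sumr.
    - move=> j l; exists (fun i => if i == j then T j l else 0); split.
        by move=> i; case: eqP => [->|_]; [case: (HT2 j)|apply: Col0].
      rewrite (bigD1 j) //= eqxx big1 ?addr0 // => i /negbTE -> //.
  case: th1 => c [Hc Hc1].
  have Lrs : L (r * s).
    apply: (cancel_lem Hfaith Hc (esym Hc1) L0 LD LM).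
    move=> i; case: (Ha i) => h Hh.
    have Hsa : homog Mg (s *: a i) by exists (op gs h); apply: (HMm).
    case: (pselect (r ^+ k *: (s *: a i) = 0)) => [Z|NZ].
    +
      case: (Hcyc (a i) (Ha i)) => I [[_ [DI1 _]] HI].
      have Hb : forall b, I b -> (r ^+ k * s) * b = 0.
        move=> b Ib; apply: Hfaith => m.
        have := proj2 (HI (b *: m)) (ideal_mul1 m Ib); case=> r' Er'.
        by rewrite -scalerA Er' scalerA mulrC -scalerA -scalerA Z !scaler0.
      have JI : forall b, I b -> J (r * s * b).
        move=> b Ib; case: (proj1 (DI1 b) Ib) => t [f [_ [Hf ->]]].
        rewrite mulr_sumr; apply: (sum_closed (P := J)) => // g /Hf [If Rf].
        have Hrsf : Rg (op (op gr gs) g) (r * s * f g) by apply: (HRm) => //; apply: (HRm).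
        have Z2 := Hb _ If.
        have [k' Ek] : exists k', k = k'.+1 by case: (k) kpos => // k' _; exists k'.
        have Hnil : (r * s * f g) ^+ k = 0 by rewrite Ek nilp_aux -Ek Z2 mul0r.
        exact (nil_J HG HR Hrsf Hnil).
      case: (proj1 (HI (a i)) (ex_intro _ 1 (esym (scale1r _)))) => N [kk [mm [Hkk Ea]]].
      have := expand_lem Hspan L0 LD LM (k := fun p => r * s * kk p) mm
        (fun p => LJ _ (JI _ (Hkk p))).
      case=> l [Hl El]; exists l; split => //; rewrite -El Ea scaler_sumr.
      by apply: eq_bigr => p _; rewrite scalerA.
    + have HU2 : U (r ^+ k *: (s *: a i)) by rewrite scalerA; exact: HK (a i).
      case: (WU r (s *: a i) k (ex_intro _ gr Hr) Hsa kpos NZ HU2) => u [j [Uu [Jj Euj]]].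
      case: (Hmult U HU) => K' [_ HK'].
      case: (proj1 (HK' u) Uu) => N1 [k1 [m1 [Hk1 Eu]]].
      case: (proj1 (HJ j) Jj) => N2 [k2 [m2 [Hk2 Ej]]].
      have K'K : forall y, K' y -> K y by move=> y Ky m; apply/HK'; apply: ideal_mul1.
      have := expand_lem Hspan L0 LD LM m1 (fun p => LK _ (K'K _ (Hk1 p))).
      case=> l1 [Hl1 El1].
      have := expand_lem Hspan L0 LD LM m2 (fun p => LJ _ (Hk2 p)).
      case=> l2 [Hl2 El2].
      exists (fun j => l1 j + l2 j); split; first by move=> j'; apply: (LD).
      under [RHS]eq_bigr => j' _ do rewrite scalerDl.
      by rewrite big_split /= -El1 -El2 -Eu -Ej -Euj scalerA.
  case: Lrs => u [j [Ku [Jj E]]]; by exists u, j.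
- case=> _ [_ WK]; split; first exact HU; split; first exact HUp.
  move=> r m k [gr Hr] [h Hm] kpos _ HUrm.
  case: (Hcyc m (ex_intro _ h Hm)) => I [[_ [DI1 _]] HI].
  have C1 : forall b, I b -> L (r * b).
    move=> b Ib; case: (proj1 (DI1 b) Ib) => t [f [_ [Hf ->]]].
    rewrite mulr_sumr; apply: (sum_closed (P := L)) => // g /Hf [If Rf].
    have Kb : K (r ^+ k * f g).
      move=> m'; case: (proj2 (HI (f g *: m')) (ideal_mul1 m' If)) => r' Er'.
      by rewrite -scalerA Er' scalerA mulrC -scalerA; apply: (UZ).
    case: (pselect (r ^+ k * f g = 0)) => [Z|NZ].
      apply: (LJ).
      have [k' Ek] : exists k', k = k'.+1 by case: (k) kpos => // k' _; exists k'.
      have Hrb : Rg (op gr g) (r * f g) by apply: (HRm).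
      have Hnil : (r * f g) ^+ k = 0 by rewrite Ek nilp_aux2 -Ek Z mul0r.
      exact (nil_J HG HR Hrb Hnil).
    case: (WK r (f g) k (ex_intro _ gr Hr) (ex_intro _ g Rf) kpos NZ Kb) => u [j [Ku [Jj E]]].
    by exists u, j.
  case: (proj1 (HI m) (ex_intro _ 1 (esym (scale1r m)))) => N [kk [mm [Hkk Em]]].
  have : forall p, exists uj : R * R, K uj.1 /\ J uj.2 /\ r * kk p = uj.1 + uj.2.
    by move=> p; case: (C1 _ (Hkk p)) => u [j [Ku [Jj E]]]; exists (u, j).
  case/choice => uj Huj.
  exists (\sum_(p < N) (uj p).1 *: mm p), (\sum_(p < N) (uj p).2 *: mm p); split.
    apply: (sum_closed_ord (P := U)) => // p; case: (Huj p) => Ku _; exact: Ku (mm p).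
  split.
    apply/HJ; exists N, (fun p => (uj p).2), mm; split => //; by move=> p; case: (Huj p) => _ [].
  rewrite -big_split /= Em scaler_sumr; apply: eq_bigr => p _.
  by rewrite scalerA; case: (Huj p) => _ [_ ->]; rewrite scalerDl.
Qed.
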